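(* Assume the standing assumptions (A1) and (A2) below. Let $t\in(1,2)$, $x^+\in D$, and for each $\alpha>0$ let $x_\alpha\in\operatorname{argmin}_{x\in D}\left[\frac12\|F(x^+)-F(x)\|_{\mathbb{Y}}^2+\alpha\|x\|_{\overline{r},1}\right]$. The following are equivalent: (i) $x^+\in k_t$; (ii) there is $C_2>0$ with $\frac12\|F(x^+)-F(x_\alpha)\|_{\mathbb{Y}}^2+\alpha\|x_\alpha\|_{\overline{r},1}\le C_2\alpha^{2-t}$ for all $\alpha>0$; (iii) there is $C_3>0$ with $\|F(x^+)-F(x_\alpha)\|_{\mathbb{Y}}\le C_3\alpha^{\frac{2-t}{2}}$ for all $\alpha>0$. More precisely, one can choose $C_2=C_t\|x^+\|_{k_t}^t$ with a constant $C_t$ depending only on $t$ and $L$, and $C_3=\sqrt{2C_2}$; and (iii) implies $\|x^+\|_{k_t}\le cC_3^{2/t}$ with a constant $c$ depending only on $t$ and $L$.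
   Context: $\Lambda$ is a countable index set. For a sequence $\omega$ of positive reals and $p\in(0,\infty)$, $\|x\|_{\omega,p}=\left(\sum_{j\in\Lambda}\omega_j^p|x_j|^p\right)^{1/p}$ (possibly $+\infty$) and $\ell^p_\omega=\{x\in\mathbb{R}^\Lambda:\|x\|_{\omega,p}<\infty\}$. For $t\in(0,2)$, $k_t=\{x:\|x\|_{k_t}<\infty\}$ with $\|x\|_{k_t}=\sup_{\alpha>0}\alpha\left(\sum_{j}\overline{a}_j^{-2}\overline{r}_j^2\mathbf{1}_{\{\overline{a}_j^{-2}\overline{r}_j\alpha<|x_j|\}}\right)^{1/t}$. (A1): $\overline{a},\overline{r}$ are sequences of positive reals indexed by $\Lambda$ such that for every $\varepsilon>0$ all but finitely many $j$ satisfy $\overline{a}_j\overline{r}_j^{-1}\le\varepsilon$; $\mathbb{Y}$ is a Banach space; $D\subseteq\ell^2_{\overline{a}}$ is closed with $D\cap\ell^1_{\overline{r}}\ne\emptyset$; $F:D\to\mathbb{Y}$ and there is $L>0$ with $L^{-1}\|x^{(1)}-x^{(2)}\|_{\overline{a},2}\le\|F(x^{(1)})-F(x^{(2)})\|_{\mathbb{Y}}\le L\|x^{(1)}-x^{(2)}\|_{\overline{a},2}$ for all $x^{(1)},x^{(2)}\in D$. (A2): if $x\in D$ and $z\in\ell^2_{\overline{a}}$ with $|z_j|\le|x_j|$ for all $j$, then $z\in D$. *)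

(* Defs.v *)
From HB Require Import structures.
From mathcomp Require Import all_boot all_order all_algebra.
From mathcomp Require Import all_classical all_reals all_analysis.
Set Implicit Arguments. Unset Strict Implicit. Unset Printing Implicit Defensive.
Import Order.TTheory GRing.Theory Num.Theory.
Import numFieldNormedType.Exports.
Local Open Scope classical_set_scope.
Local Open Scope ring_scope.

Section Defs.
Context {R : realType} {Lam : countType}.

Definition wnorm (w : Lam -> R) (p : R) (x : Lam -> R) : \bar R :=
  poweR (esum [set: Lam] (fun j => ((powR (w j) p * powR `|x j| p)%:E))) p^-1.

Definition lp (w : Lam -> R) (p : R) : set (Lam -> R) :=
  [set x | (wnorm w p x < +oo)%E].

Definition ktnorm (a r : Lam -> R) (t : R) (x : Lam -> R) : \bar R :=
  ereal_sup [set (alpha%:E *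
     poweR (esum [set: Lam] (fun j =>
        ((if a j ^- 2 * r j * alpha < `|x j| then a j ^- 2 * r j ^+ 2 else 0)%:E))) t^-1)%E
    | alpha in [set alpha : R | 0 < alpha]].

Definition kt (a r : Lam -> R) (t : R) : set (Lam -> R) :=
  [set x | (ktnorm a r t x < +oo)%E].

Definition closed_l2 (a : Lam -> R) (D : set (Lam -> R)) : Prop :=
  forall (xn : nat -> (Lam -> R)) (x : Lam -> R),
    (forall n, D (xn n)) -> lp a 2 x ->
    (fun n => wnorm a 2 (fun j => xn n j - x j)) @ \oo --> 0%E ->
    D x.

Definition A1 (a r : Lam -> R) (Y : normedModType R) (D : set (Lam -> R))
    (F : (Lam -> R) -> Y) (L : R) : Prop :=
  [/\ forall j, 0 < a j /\ 0 < r j,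
      forall eps, 0 < eps -> finite_set [set j | eps < a j / r j],
      D `<=` lp a 2 /\ closed_l2 a D,
      D `&` lp r 1 !=set0 &
      0 < L /\ forall x1 x2, D x1 -> D x2 ->
        ((L^-1)%:E * wnorm a 2 (fun j => (x1 j - x2 j)%R) <= (`|F x1 - F x2|)%:E)%E /\
        ((`|F x1 - F x2|)%:E <= L%:E * wnorm a 2 (fun j => (x1 j - x2 j)%R))%E].

Definition A2 (a : Lam -> R) (D : set (Lam -> R)) : Prop :=
  forall x z, D x -> lp a 2 z -> (forall j, `|z j| <= `|x j|) -> D z.

Definition tikh (r : Lam -> R) (Y : normedModType R) (F : (Lam -> R) -> Y)
    (xp : Lam -> R) (alpha : R) (x : Lam -> R) : \bar R :=
  ((2^-1 * `|F xp - F x| ^+ 2)%:E + alpha%:E * wnorm r 1 x)%E.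

End Defs.

(* Main.v *)
Require Import Defs.
From HB Require Import structures.
From mathcomp Require Import all_boot all_order all_algebra.
From mathcomp Require Import all_classical all_reals all_analysis.
From mathcomp Require Import ring lra.
Import Order.TTheory GRing.Theory Num.Theory.
Import numFieldNormedType.Exports.
Local Open Scope classical_set_scope.
Local Open Scope ring_scope.


Section H.
Context {R : realType} {Lam : countType}.
Implicit Types (w x : Lam -> R).

Definition Q w x : \bar R := esum [set: Lam] (fun j => (w j ^+ 2 * x j ^+ 2)%:E).
Definition N1 w x : \bar R := esum [set: Lam] (fun j => (w j * `|x j|)%:E).

Lemma Q_ge0 w x : (0 <= Q w x)%E.
Proof. by apply: esum_ge0 => j _; rewrite lee_fin mulr_ge0 // sqr_ge0. Qed.

Lemma N1_ge0 w x : (forall j, 0 <= w j) -> (0 <= N1 w x)%E.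
Proof. by move=> w0; apply: esum_ge0 => j _; rewrite lee_fin mulr_ge0. Qed.

Lemma wnorm2E w x : (forall j, 0 <= w j) -> wnorm w 2 x = poweR (Q w x) 2^-1.
Proof.
move=> w0; rewrite /wnorm /Q; congr poweR; apply: eq_esum => j _.
by rewrite !powR_mulrn // real_normK // num_real.
Qed.

Lemma wnorm1E w x : (forall j, 0 <= w j) -> wnorm w 1 x = N1 w x.
Proof.
move=> w0; rewrite /wnorm invr1 poweRe1; last by apply: esum_ge0 => j _; rewrite lee_fin mulr_ge0 // powR_ge0.
by apply: eq_esum => j _; rewrite !powRr1.
Qed.

Lemma sqrtE (s : \bar R) : (0 <= s)%E -> poweR s 2^-1 =
  if s is s'%:E then (Num.sqrt s')%:E else +oo%E.
Proof.
case: s => [s| |] //= s0; first by rewrite powR12_sqrt.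
by rewrite invr_eq0 pnatr_eq0.
Qed.

Lemma esumZle (S : set Lam) (c : R) (f : Lam -> \bar R) :
  0 <= c -> (forall i, (0 <= f i)%E) ->
  (esum S (fun i => c%:E * f i) <= c%:E * esum S f)%E.
Proof.
move=> c0 f0; apply: ge_ereal_sup => _ [X [finX XS] <-].
rewrite -ge0_mule_fsumr // lee_wpmul2l ?lee_fin //.
by apply: ereal_sup_ubound; exists X.
Qed.

Lemma lpQ w x : (forall j, 0 <= w j) -> lp w 2 x <-> (Q w x < +oo)%E.
Proof.
move=> w0; rewrite /lp /= wnorm2E // sqrtE ?Q_ge0 //.
have := Q_ge0 w x; case: (Q w x) => [s _| _|].
- by split => _; rewrite ltry.
- by split.
- by rewrite leeNy_eq.
Qed.

Lemma Q_le w x z : (forall j, `|z j| <= `|x j|) -> (Q w z <= Q w x)%E.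
Proof.
move=> h; apply: le_esum => j _; rewrite lee_fin ler_wpM2l ?sqr_ge0 //.
by rewrite -(ger0_norm (sqr_ge0 (z j))) -(ger0_norm (sqr_ge0 (x j))) !normrX lerXn2r // nnegrE.
Qed.


Lemma finle (X : \bar R) (y : R) : (0 <= X)%E -> (X <= y%:E)%E -> X = (fine X)%:E.
Proof. by case: X. Qed.

Lemma lip_lo (a d : Lam -> R) (L e : R) : (forall j, 0 <= a j) -> 0 < L ->
  ((L^-1)%:E * wnorm a 2 d <= e%:E)%E -> exists s, Q a d = s%:E /\ s <= (L * e) ^+ 2.
Proof.
move=> a0 L0; rewrite wnorm2E // sqrtE ?Q_ge0 //.
have := Q_ge0 a d; case: (Q a d) => [s s0| _|]; last by rewrite leeNy_eq.
- rewrite -EFinM lee_fin => h; exists s; split => //.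
  have h2 : Num.sqrt s <= L * e by rewrite -ler_pdivrMl.
  rewrite -(sqr_sqrtr s0) ler_sqr ?nnegrE ?sqrtr_ge0 //.
  by apply: le_trans h2; apply: sqrtr_ge0.
- by rewrite mulry gtr0_sg ?invr_gt0 // mul1e.
Qed.

Lemma lip_up (a d : Lam -> R) (L e s : R) : (forall j, 0 <= a j) ->
  (e%:E <= L%:E * wnorm a 2 d)%E -> Q a d = s%:E -> e <= L * Num.sqrt s.
Proof.
move=> a0; rewrite wnorm2E // sqrtE ?Q_ge0 // => + h; rewrite h.
by rewrite -EFinM lee_fin.
Qed.

End H.


Lemma real_core (R : realType) (e ez L be wb eb q nz n1x : R) : 0 < L -> 0 < be -> 0 <= e ->
  0 <= wb -> 0 <= q -> wb <= 2 / be * eb -> q <= be ^+ 2 / 4 * wb ->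
  ez <= e + L * Num.sqrt q -> 0 <= ez ->
  2^-1 * e ^+ 2 + L ^+ 2 * be / 2 * n1x <= 2^-1 * ez ^+ 2 + L ^+ 2 * be / 2 * nz ->
  n1x = nz + eb -> wb <= 16 * e ^+ 2 / (L ^+ 2 * be ^+ 2).
Proof.
move=> L0 be0 e0 wb0 q0 hwb hq hez ez0 hopt hn.
set v := Num.sqrt wb.
have v0 : 0 <= v by apply: sqrtr_ge0.
have wbv : wb = v ^+ 2 by rewrite sqr_sqrtr.
have sq : Num.sqrt q <= be / 2 * v.
  have -> : be / 2 * v = Num.sqrt (be ^+ 2 / 4 * wb).
    have -> : be ^+ 2 / 4 = (be / 2) ^+ 2 by field.
    rewrite sqrtrM ?sqr_ge0 // sqrtr_sqr ger0_norm //.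
    by rewrite divr_ge0 // ltW.
  by rewrite ler_sqrt // mulr_ge0 // divr_ge0 ?sqr_ge0.
clearbody v.
have hez2 : ez <= e + L * (be / 2 * v).
  apply: le_trans hez _; rewrite lerD2l ler_wpM2l // ltW //.
have hez3 : ez ^+ 2 <= (e + L * (be / 2 * v)) ^+ 2.
  by rewrite ler_sqr ?nnegrE // (le_trans ez0 hez2).
have heb : be / 2 * wb <= eb.
  have -> : eb = be / 2 * (2 / be * eb) by field; rewrite gt_eqF.
  by rewrite ler_wpM2l // divr_ge0 // ltW.
have key : L * be * v ^+ 2 <= 4 * e * v.
  have : L ^+ 2 * be ^+ 2 * v ^+ 2 / 8 <= e * L * be * v / 2.
    rewrite hn in hopt; rewrite wbv in heb.
    have hal : 0 <= L ^+ 2 * be / 2.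
      by apply: divr_ge0 => //; apply: mulr_ge0; [apply: sqr_ge0 | apply: ltW].
    have h1 := ler_wpM2l hal heb.
    have h2 : (e + L * (be / 2 * v)) ^+ 2 = e ^+ 2 + e * L * be * v + L ^+ 2 * be ^+ 2 * v ^+ 2 / 4.
      by field.
    have h3 : L ^+ 2 * be / 2 * (be / 2 * v ^+ 2) = L ^+ 2 * be ^+ 2 * v ^+ 2 / 4 by field.
    rewrite h2 in hez3; rewrite h3 in h1.
    lra.
  move=> h; have Lb : 0 < L * be by apply: mulr_gt0.
  nra.
have hv : v <= 4 * e / (L * be).
  have Lb : 0 < L * be by apply: mulr_gt0.
  rewrite ler_pdivlMr //.
  have [v00|vpos] := eqVneq v 0; first by rewrite v00 mul0r mulr_ge0.
  have vp : 0 < v by rewrite lt_neqAle eq_sym vpos.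
  nra.
rewrite wbv.
have -> : 16 * e ^+ 2 / (L ^+ 2 * be ^+ 2) = (4 * e / (L * be)) ^+ 2.
  by field; rewrite (gt_eqF L0) (gt_eqF be0).
by rewrite ler_sqr ?nnegrE // divr_ge0 ?mulr_ge0 // ltW.
Qed.


Section P2.
Context {R : realType}.

Lemma pow2_big (y : R) : exists n : nat, y < 2 ^+ n.
Proof.
have [y0|y0] := leP y 0; first by exists 0%N; rewrite expr0; lra.
exists (Num.bound y).
apply: lt_le_trans (archi_boundP (ltW y0)) _.
rewrite -natrX ler_nat; apply: ltnW; exact: ltn_expl.
Qed.

Lemma dyadic_lo (u al : R) : 0 < u -> u <= al ->
  exists m : nat, al / 2 ^+ m.+1 < u /\ u <= al / 2 ^+ m.
Proof.
move=> u0 ual.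
have ex : exists m, al / 2 ^+ m.+1 < u.
  have [n hn] := pow2_big (al / u).
  exists n; rewrite ltr_pdivrMr ?exprn_gt0 // exprS.
  move: hn; rewrite ltr_pdivrMr // => hn.
  have h2 : 0 < 2 ^+ n :> R by rewrite exprn_gt0.
  nra.
pose m := ex_minn ex.
have Pm : al / 2 ^+ m.+1 < u by rewrite /m; case: ex_minnP.
exists m; split => //.
move: (erefl m); rewrite {2}/m; case: ex_minnP => m0 _ hmin em.
case: m0 em hmin => [->|m1 -> hmin]; first by rewrite expr0 divr1.
have := hmin m1; rewrite ltnn => h; rewrite leNgt; apply/negP => h1.
by have := h h1.
Qed.

Lemma dyadic_hi (u al : R) : 0 < al -> al < u ->
  exists k : nat, al * 2 ^+ k < u /\ u <= al * 2 ^+ k.+1.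
Proof.
move=> al0 ual.
have ex : exists m, u <= al * 2 ^+ m.+1.
  have [n hn] := pow2_big (u / al).
  exists n; rewrite exprS.
  move: hn; rewrite ltr_pdivrMr // => hn.
  have h2 : 0 < 2 ^+ n :> R by rewrite exprn_gt0.
  nra.
pose m := ex_minn ex.
have Pm : u <= al * 2 ^+ m.+1 by rewrite /m; case: ex_minnP.
exists m; split => //.
move: (erefl m); rewrite {2}/m; case: ex_minnP => m0 _ hmin em.
case: m0 em hmin => [->|m1 -> hmin]; first by rewrite expr0 mulr1.
have := hmin m1; rewrite ltnn => h; rewrite ltNge; apply/negP => h1.
by have := h h1.
Qed.

Lemma powRV (x t : R) : 0 < x -> powR (x^-1) t = (powR x t)^-1.
Proof.
move=> x0; apply: (@mulrI _ (powR x t)); first by rewrite unitfE gt_eqF // powR_gt0.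
rewrite -powRM ?invr_ge0 ?ltW // divff ?gt_eqF // powR1 divff // gt_eqF // powR_gt0.
all: by [].
Qed.

Lemma powR2n (t : R) (n : nat) : powR (2 ^+ n) t = (powR 2 t) ^+ n.
Proof.
by rewrite -powR_mulrn // -powRrM mulrC powRrM powR_mulrn // powR_ge0.
Qed.

Lemma geo_esum (c q : R) : 0 <= c -> 0 <= q < 1 ->
  (esum [set: nat] (fun m => (c * q ^+ m)%:E) <= (c / (1 - q))%:E)%E.
Proof.
move=> c0 /andP[q0 q1].
rewrite -nneseries_esumT; last by move=> n; rewrite lee_fin mulr_ge0 // exprn_ge0.
apply: lime_le; first by apply: is_cvg_nneseries => n _ _; rewrite lee_fin mulr_ge0 // exprn_ge0.
apply: nearW => n; rewrite /= sumEFin lee_fin.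
have := geometric_seriesE c (negbT (lt_eqF q1)); move/(congr1 (fun f => f n)).
rewrite /series /= => ->.
rewrite ler_pdivrMr ?subr_gt0 // mulrVK ?unitfE ?gt_eqF ?subr_gt0 //.
rewrite ler_piMr // lerBlDr lerDl exprn_ge0 //.
Qed.


Lemma powR2_lt (x y : R) : x < y -> powR 2 x < powR 2 y.
Proof.
move=> xy; rewrite /powR pnatr_eq0 /= ltr_expR.
by rewrite ltr_pM2r // ln_gt0 // ltr1n.
Qed.

Lemma rho_bounds (t : R) : 1 < t < 2 -> 2 < powR 2 t < 4.
Proof.
move=> /andP[t1 t2]; apply/andP; split.
  by have := powR2_lt _ _ t1; rewrite powRr1.
have := powR2_lt _ _ t2; rewrite powR_mulrn //.
by rewrite expr2 -natrM.
Qed.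

End P2.


Section K.
Context {R : realType} {Lam : countType}.

Definition Wf (a r : Lam -> R) (xp : Lam -> R) (be : R) : \bar R :=
  esum [set: Lam] (fun j => (if a j ^- 2 * r j * be < `|xp j| then a j ^- 2 * r j ^+ 2 else 0)%:E).

Lemma Wf_ge0 (a r : Lam -> R) xp be : (forall j, 0 < a j /\ 0 < r j) -> (0 <= Wf a r xp be)%E.
Proof.
move=> ar; apply: esum_ge0 => j _; case: ifP => _ //.
by case: (ar j) => a0 r0; rewrite lee_fin mulr_ge0 ?invr_ge0 ?exprn_ge0 // ltW.
Qed.

Lemma ktnorm_ge (a r : Lam -> R) t xp be : 0 < be ->
  (be%:E * poweR (Wf a r xp be) t^-1 <= ktnorm a r t xp)%E.
Proof. by move=> be0; apply: ereal_sup_ubound; exists be. Qed.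

Lemma Wle (a r : Lam -> R) t xp k be : (forall j, 0 < a j /\ 0 < r j) -> 0 < t ->
  ktnorm a r t xp = k%:E -> 0 < be ->
  (Wf a r xp be <= (powR k t / powR be t)%:E)%E.
Proof.
move=> ar t0 kE be0.
have h := ktnorm_ge a r t xp be be0; rewrite kE in h.
have := Wf_ge0 a r xp be ar; move: h.
case: (Wf a r xp be) => [w| |] h w0; last by rewrite leeNy_eq in w0.
- rewrite poweR_EFin -EFinM lee_fin in h; rewrite lee_fin.
  have w0' : 0 <= w by rewrite -lee_fin.
  have h2 := ge0_ler_powR (ltW t0) _ _ h.
  rewrite ler_pdivlMr ?powR_gt0 // mulrC.
  apply: le_trans (h2 _ _); rewrite ?nnegrE ?mulr_ge0 ?powR_ge0 ?(ltW be0) //.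
    by rewrite powRM ?powR_ge0 ?(ltW be0) // -powRrM mulVf ?gt_eqF // powRr1.
  by apply: le_trans h; rewrite mulr_ge0 ?powR_ge0 ?(ltW be0).
- by rewrite poweRyr ?invr_eq0 ?gt_eqF // mulry gtr0_sg // mul1e in h.
Qed.


Lemma esum_swap (T1 T2 : choiceType) (f : T1 -> T2 -> \bar R) : (forall i j, (0 <= f i j)%E) ->
  esum [set: T1] (fun i => esum [set: T2] (fun j => f i j)) =
  esum [set: T2] (fun j => esum [set: T1] (fun i => f i j)).
Proof.
move=> f0; rewrite !esum_esum //.
rewrite (@reindex_esum _ _ _ ([set: T2] `*`` (fun=> [set: T1])) ([set: T1] `*`` (fun=> [set: T2]))
  (fun p => (p.2, p.1))) //.
split.
- by move=> [? ?] _.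
- by move=> [? ?] [? ?] _ _ [-> ->].
- by move=> [y1 y2] _; exists (y2, y1).
Qed.


Lemma esum_single (f : nat -> \bar R) m : (forall n, (0 <= f n)%E) ->
  (f m <= esum [set: nat] f)%E.
Proof.
move=> f0; apply: esum_ge; exists [set m].
  by split; [exact: finite_set1 | by []].
by rewrite fsbig_set1.
Qed.

Lemma S1bound (a r : Lam -> R) t xp k al : (forall j, 0 < a j /\ 0 < r j) -> 1 < t < 2 ->
  ktnorm a r t xp = k%:E -> 0 < al ->
  (esum [set: Lam] (fun j => (if a j ^- 2 * r j * al < `|xp j| then 0 else a j ^+ 2 * xp j ^+ 2)%:E)
   <= (powR k t * powR al (2 - t) * (powR 2 t / (1 - powR 2 t / 4)))%:E)%E.
Proof.
move=> ar /andP[t1 t2] kE al0.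
have t0 : 0 < t by lra.
have a0 j : 0 < a j by case: (ar j).
have r0 j : 0 < r j by case: (ar j).
pose ws j := a j ^- 2 * r j ^+ 2.
have ws0 j : 0 <= ws j by rewrite /ws mulr_ge0 ?invr_ge0 ?exprn_ge0 // ltW.
pose g j m := ((al ^+ 2 / 4 ^+ m) * (if a j ^- 2 * r j * (al / 2 ^+ m.+1) < `|xp j| then ws j else 0))%:E.
have g0 j m : (0 <= g j m)%E.
  rewrite /g lee_fin; apply: mulr_ge0; first by apply: divr_ge0; [apply: sqr_ge0 | apply: exprn_ge0].
  by case: ifP.
apply: (@le_trans _ _ (esum [set: Lam] (fun j => esum [set: nat] (g j)))).
  apply: le_esum => j _.
  case hA: (a j ^- 2 * r j * al < `|xp j|); first by rewrite /=; apply: esum_ge0 => m _; apply: g0.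
  set c := a j ^- 2 * r j.
  have c0 : 0 < c by rewrite /c mulr_gt0 // invr_gt0 exprn_gt0.
  have [x0|xn0] := eqVneq (xp j) 0.
    by rewrite x0 expr0n /= mulr0; apply: esum_ge0 => m _; apply: g0.
  have u0 : 0 < `|xp j| by rewrite normr_gt0.
  have ule : `|xp j| <= c * al by rewrite leNgt hA.
  have [m [h1 h2]] := dyadic_lo _ _ u0 ule.
  apply: le_trans (esum_single _ m (g0 j)).
  rewrite /g lee_fin ifT; last by rewrite mulrA.
  have hx2 : xp j ^+ 2 <= (c * al / 2 ^+ m) ^+ 2.
    rewrite -[xp j ^+ 2]real_normK ?num_real // ler_sqr // nnegrE.
    by apply: le_trans h2; apply: normr_ge0.
  apply: le_trans (ler_wpM2l (sqr_ge0 (a j)) hx2) _.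
  have e4 : (4 : R) ^+ m = (2 ^+ m) ^+ 2 by rewrite -exprM mulnC exprM expr2 -natrM.
  rewrite e4 /ws /c le_eqVlt; apply/orP; left; apply/eqP; field.
  by rewrite (gt_eqF (a0 j)) expf_neq0 // pnatr_eq0.
rewrite (esum_swap _ _ g g0).
set rho := powR 2 t.
have [rho2 rho4] : 2 < rho /\ rho < 4 by apply/andP; apply: rho_bounds; rewrite t1 t2.
have K0 : 0 <= powR k t by apply: powR_ge0.
apply: (@le_trans _ _ (esum [set: nat] (fun m => (powR k t * powR al (2 - t) * rho * (rho / 4) ^+ m)%:E))).
  apply: le_esum => m _.
  have be0 : 0 < al / 2 ^+ m.+1 by rewrite divr_gt0 // exprn_gt0.
  have cm0 : 0 <= al ^+ 2 / 4 ^+ m by rewrite divr_ge0 // ?sqr_ge0 // exprn_ge0.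
  rewrite /g; under eq_esum do rewrite EFinM.
  apply: le_trans (esumZle _ _ _ cm0 _) _.
    by move=> j; case: ifP => _; rewrite lee_fin ?ws0.
  apply: le_trans (lee_wpmul2l _ (Wle a r t xp k (al / 2 ^+ m.+1) ar t0 kE be0)) _.
    by rewrite lee_fin.
  rewrite -EFinM lee_fin le_eqVlt; apply/orP; left; apply/eqP.
  rewrite powRM ?invr_ge0 ?exprn_ge0 ?(ltW al0) // powRV ?exprn_gt0 // powR2n.
  rewrite powRB ?(gt_eqF al0) ?implybT // powR_mulrn ?(ltW al0) //.
  rewrite exprMn exprVn -/rho [rho ^+ m.+1]exprS.
  field.
  by rewrite (gt_eqF (powR_gt0 _ al0)) expf_neq0 ?pnatr_eq0 // expf_neq0 // gt_eqF // (lt_trans _ rho2).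
apply: le_trans (geo_esum _ _ _ _) _.
- by rewrite mulr_ge0 ?mulr_ge0 ?powR_ge0 // ltW // (lt_trans _ rho2).
- by apply/andP; split; [rewrite divr_ge0 // ltW // (lt_trans _ rho2) | rewrite ltr_pdivrMr // mul1r].
by rewrite lee_fin -!mulrA.
Qed.

Lemma S2bound (a r : Lam -> R) t xp k al : (forall j, 0 < a j /\ 0 < r j) -> 1 < t < 2 ->
  ktnorm a r t xp = k%:E -> 0 < al ->
  (esum [set: Lam] (fun j => (if a j ^- 2 * r j * al < `|xp j| then r j * `|xp j| else 0)%:E)
   <= (powR k t * (powR al (2 - t) / al) * (2 / (1 - 2 / powR 2 t)))%:E)%E.
Proof.
move=> ar /andP[t1 t2] kE al0.
have t0 : 0 < t by lra.
have a0 j : 0 < a j by case: (ar j).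
have r0 j : 0 < r j by case: (ar j).
pose ws j := a j ^- 2 * r j ^+ 2.
have ws0 j : 0 <= ws j by rewrite /ws mulr_ge0 ?invr_ge0 ?exprn_ge0 // ltW.
pose g j m := ((al * 2 ^+ m.+1) * (if a j ^- 2 * r j * (al * 2 ^+ m) < `|xp j| then ws j else 0))%:E.
have g0 j m : (0 <= g j m)%E.
  rewrite /g lee_fin; apply: mulr_ge0; first by apply: mulr_ge0; [apply: ltW | apply: exprn_ge0].
  by case: ifP.
apply: (@le_trans _ _ (esum [set: Lam] (fun j => esum [set: nat] (g j)))).
  apply: le_esum => j _.
  case hA: (a j ^- 2 * r j * al < `|xp j|); last by rewrite /=; apply: esum_ge0 => m _; apply: g0.
  set c := a j ^- 2 * r j.
  have c0 : 0 < c by rewrite /c mulr_gt0 // invr_gt0 exprn_gt0.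
  have [m [h1 h2]] := dyadic_hi _ _ (mulr_gt0 c0 al0) hA.
  apply: le_trans (esum_single _ m (g0 j)).
  rewrite /g lee_fin ifT; last by rewrite mulrA.
  apply: le_trans (ler_wpM2l (ltW (r0 j)) h2) _.
  rewrite /ws /c le_eqVlt; apply/orP; left; apply/eqP; field.
  by rewrite (gt_eqF (a0 j)).
rewrite (esum_swap _ _ g g0).
set rho := powR 2 t.
have [rho2 rho4] : 2 < rho /\ rho < 4 by apply/andP; apply: rho_bounds; rewrite t1 t2.
have rho0 : 0 < rho by apply: lt_trans rho2.
have K0 : 0 <= powR k t by apply: powR_ge0.
apply: (@le_trans _ _ (esum [set: nat] (fun m => (powR k t * (powR al (2 - t) / al) * 2 * (2 / rho) ^+ m)%:E))).
  apply: le_esum => m _.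
  have be0 : 0 < al * 2 ^+ m by rewrite mulr_gt0 // exprn_gt0.
  have cm0 : 0 <= al * 2 ^+ m.+1 by rewrite mulr_ge0 ?exprn_ge0 // ltW.
  rewrite /g; under eq_esum do rewrite EFinM.
  apply: le_trans (esumZle _ _ _ cm0 _) _.
    by move=> j; case: ifP => _; rewrite lee_fin ?ws0.
  apply: le_trans (lee_wpmul2l _ (Wle a r t xp k (al * 2 ^+ m) ar t0 kE be0)) _.
    by rewrite lee_fin.
  rewrite -EFinM lee_fin le_eqVlt; apply/orP; left; apply/eqP.
  rewrite powRM ?exprn_ge0 ?(ltW al0) // powR2n.
  rewrite powRB ?(gt_eqF al0) ?implybT // powR_mulrn ?(ltW al0) //.
  rewrite exprMn exprVn -/rho [(2 : R) ^+ m.+1]exprS.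
  field.
  by rewrite (gt_eqF (powR_gt0 _ al0)) (gt_eqF al0) expf_neq0 // gt_eqF.
apply: le_trans (geo_esum _ _ _ _) _.
- by rewrite mulr_ge0 // mulr_ge0 // divr_ge0 ?powR_ge0 // ltW.
- by apply/andP; split; [rewrite divr_ge0 // ltW | rewrite ltr_pdivrMr // mul1r].
by rewrite lee_fin -!mulrA.
Qed.

End K.


Section C3.
Context {R : realType} {Lam : countType}.

Lemma tikhE (r : Lam -> R) (Y : normedModType R) (F : (Lam -> R) -> Y) xp al y :
  (forall j, 0 <= r j) ->
  tikh r F xp al y = ((2^-1 * `|F xp - F y| ^+ 2)%:E + al%:E * N1 r y)%E.
Proof. by move=> r0; rewrite /tikh wnorm1E. Qed.

Lemma core3 (a r : Lam -> R) (Y : normedModType R) (D : set (Lam -> R))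
  (F : (Lam -> R) -> Y) (L be : R) (xp x : Lam -> R) :
  (forall j, 0 < a j /\ 0 < r j) -> 0 < L -> 0 < be ->
  (forall x1 x2, D x1 -> D x2 ->
     ((L^-1)%:E * wnorm a 2 (fun j => (x1 j - x2 j)%R) <= (`|F x1 - F x2|)%:E)%E /\
     ((`|F x1 - F x2|)%:E <= L%:E * wnorm a 2 (fun j => (x1 j - x2 j)%R))%E) ->
  D `<=` lp a 2 -> A2 a D -> D xp -> D x ->
  (forall z, D z -> (tikh r F xp (L^+2 * be / 2) x <= tikh r F xp (L^+2 * be / 2) z)%E) ->
  (esum [set: Lam] (fun j => (if a j ^- 2 * r j * be < `|xp j| then a j ^- 2 * r j ^+ 2 else 0)%:E)
   <= ((16 / L^+2 + 4 * L^+2) * `|F xp - F x| ^+ 2 / be ^+ 2)%:E)%E.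
Proof.
move=> ar L0 be0 lip Dlp A2D Dxp Dx opt.
have a0 j : 0 < a j by case: (ar j).
have r0 j : 0 < r j by case: (ar j).
have a0' j : 0 <= a j by apply/ltW.
have r0' j : 0 <= r j by apply/ltW.
set al := L^+2 * be / 2.
have al0 : 0 < al by rewrite /al; apply: divr_gt0 => //; apply: mulr_gt0 => //; apply: exprn_gt0.
set e := `|F xp - F x|.
have D0 : D (fun=> 0).
  apply: (A2D xp) => //; last by move=> j; rewrite normr0.
  apply/lpQ => //; rewrite /Q (@esum1 _ _ _ _ (fun j => _)); first by rewrite ltry.
  by move=> j _; rewrite expr0n /= mulr0.
have N10 : N1 r (fun=> 0) = 0%E.
  by rewrite /N1 esum1 // => j _; rewrite normr0 mulr0.
have [n1x N1x] : exists n1x, N1 r x = n1x%:E.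
  have := opt _ D0; rewrite !tikhE // N10 mule0 adde0.
  have := N1_ge0 r x r0'; case: (N1 r x) => [n _ _| _|]; [by exists n| |by rewrite leeNy_eq].
  by rewrite mulry gtr0_sg // mul1e addey.
pose d j := a j ^- 2 * r j * be / 2.
have d0 j : 0 < d j.
  by rewrite /d; apply: divr_gt0 => //; apply: mulr_gt0 => //; apply: mulr_gt0 => //; rewrite invr_gt0 exprn_gt0.
pose B j := (a j ^- 2 * r j * be < `|xp j|) && (d j < `|x j|).
pose z j := if B j then x j * (1 - d j / `|x j|) else x j.
have hz j : `|z j| = if B j then `|x j| - d j else `|x j|.
  rewrite /z; case: ifP => // /andP[_ h].
  have xn0 : 0 < `|x j| by apply: lt_trans h.
  rewrite normrM [`|1 - _|]ger0_norm; last by rewrite subr_ge0 ler_pdivrMr // mul1r ltW.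
  by rewrite mulrBr mulr1 mulrCA divff ?mulr1 // gt_eqF.
have hxz j : (x j - z j) ^+ 2 = if B j then d j ^+ 2 else 0.
  rewrite /z; case: ifP => [/andP[_ h]|]; last by rewrite subrr expr0n.
  have xn0 : 0 < `|x j| by apply: lt_trans h.
  rewrite mulrBr mulr1 opprB addrC subrK -real_normK ?num_real //.
  rewrite normrM (ger0_norm (ltW (divr_gt0 (d0 j) xn0))) mulrCA divff ?mulr1 //.
  by rewrite gt_eqF.
have zlex j : `|z j| <= `|x j|.
  by rewrite hz; case: ifP => // _; rewrite lerBlDr lerDl ltW.
have Dz : D z.
  apply: (A2D x) => //; apply/lpQ => //; apply: le_lt_trans (Q_le a x z zlex) _.
  by apply/lpQ => //; apply: Dlp.
pose ws j := a j ^- 2 * r j ^+ 2.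
pose WB := esum [set: Lam] (fun j => (if B j then ws j else 0)%:E).
pose EB := esum [set: Lam] (fun j => (if B j then r j * d j else 0)%:E).
have N1xz : N1 r x = (N1 r z + EB)%E.
  have h1 j : [set: Lam] j -> (0 <= (r j * `|z j|)%:E)%E.
    by move=> _; rewrite lee_fin; apply: mulr_ge0 (r0' j) (normr_ge0 _).
  have h2 j : [set: Lam] j -> (0 <= (if B j then r j * d j else 0)%:E)%E.
    by move=> _; case: ifP => _; rewrite lee_fin // ltW // mulr_gt0.
  rewrite /N1 /EB -esumD //.
  apply: eq_esum => j _; rewrite -EFinD hz; case: ifP => _; last by rewrite addr0.
  by rewrite mulrBr subrK.
have WBle : (WB <= (2 / be)%:E * EB)%E.
  rewrite /WB (eq_esum (b := fun j => ((2/be)%:E * (if B j then r j * d j else 0)%:E)%E)); last first.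
    move=> j _; rewrite -EFinM; case: ifP => _; last by rewrite mulr0.
    congr EFin; rewrite /ws /d; field.
    by rewrite (gt_eqF (a0 j)) (gt_eqF be0).
  apply: esumZle; first by rewrite divr_ge0 // ltW.
  by move=> j; case: ifP => _; rewrite lee_fin // ltW // mulr_gt0.
have Qxz : (Q a (fun j => (x j - z j)%R) <= (be ^+ 2 / 4)%:E * WB)%E.
  rewrite /Q /WB (eq_esum (b := fun j => ((be ^+ 2 / 4)%:E * (if B j then ws j else 0)%:E)%E)); last first.
    move=> j _; rewrite -EFinM hxz; case: ifP => _; last by rewrite !mulr0.
    congr EFin; rewrite /ws /d; field.
    by rewrite (gt_eqF (a0 j)).
  apply: esumZle; first by rewrite divr_ge0 // sqr_ge0.
  by move=> j; case: ifP => _; rewrite lee_fin // ltW // mulr_gt0 // ?invr_gt0 exprn_gt0.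
have N1z0 := N1_ge0 r z r0'.
have EB0 : (0 <= EB)%E.
  by apply: esum_ge0 => j _; case: ifP => _; rewrite lee_fin // ltW // mulr_gt0.
have WB0 : (0 <= WB)%E.
  by apply: esum_ge0 => j _; case: ifP => _; rewrite lee_fin // ltW // mulr_gt0 // ?invr_gt0 exprn_gt0.
have EBle : (EB <= n1x%:E)%E by rewrite -N1x N1xz leeDr.
have N1zle : (N1 r z <= n1x%:E)%E by rewrite -N1x N1xz leeDl.
rewrite (finle _ _ EB0 EBle) in N1xz WBle.
rewrite (finle _ _ N1z0 N1zle) in N1xz.
move: N1xz; rewrite N1x -EFinD => -[n1xE].
set eb := fine EB in WBle n1xE.
set nz := fine (N1 r z) in n1xE.
have N1zE : N1 r z = nz%:E by apply: finle N1z0 N1zle.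
rewrite -EFinM in WBle.
have WBE := finle _ _ WB0 WBle.
set wb := fine WB in WBE.
rewrite WBE -EFinM in Qxz.
have QE := finle _ _ (Q_ge0 a (fun j => (x j - z j)%R)) Qxz.
set q := fine (Q a (fun j => (x j - z j)%R)) in QE.
have hFxz := lip_up _ _ _ _ _ a0' (lip x z Dx Dz).2 QE.
have hopt := opt z Dz.
rewrite !tikhE // N1x N1zE -!EFinM -!EFinD lee_fin in hopt.
have hez : `|F xp - F z| <= e + L * Num.sqrt q.
  have -> : F xp - F z = (F xp - F x) + (F x - F z) by rewrite addrA subrK.
  by apply: (le_trans (ler_normD _ _)); rewrite lerD2l.
have q0 : 0 <= q by rewrite -lee_fin -QE Q_ge0.
have wb0 : 0 <= wb by rewrite -lee_fin -WBE.
have WBle' : wb <= 2 / be * eb by rewrite -lee_fin -WBE.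
have Qxz' : q <= be ^+ 2 / 4 * wb by rewrite -lee_fin -QE.
have wbb := real_core _ _ _ _ _ _ _ _ _ _ L0 be0 (normr_ge0 _) wb0 q0 WBle' Qxz' hez (normr_ge0 _) hopt n1xE.
have c4 : 0 <= 4 / be ^+ 2 by apply: divr_ge0 => //; apply: sqr_ge0.
have [s [Qs sle]] := lip_lo _ _ _ _ a0' L0 (lip xp x Dxp Dx).1.
apply: (@le_trans _ _ (esum [set: Lam] (fun j => ((if B j then ws j else 0)%:E
   + (4 / be ^+ 2)%:E * (a j ^+ 2 * (xp j - x j) ^+ 2)%:E)%E))).
  apply: le_esum => j _; rewrite -EFinM -EFinD lee_fin.
  have hn : 0 <= 4 / be ^+ 2 * (a j ^+ 2 * (xp j - x j) ^+ 2).
    by apply: mulr_ge0 => //; apply: mulr_ge0; apply: sqr_ge0.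
  rewrite /B; case hA: (a j ^- 2 * r j * be < `|xp j|) => /=; last by rewrite add0r.
  case hB: (d j < `|x j|); first by rewrite /= lerDl.
  rewrite /= add0r; move/negbT: hB; rewrite -leNgt => hB.
  have hd2 : a j ^- 2 * r j * be = 2 * d j.
    by rewrite [2 * _]mulrC divfK // pnatr_eq0.
  have h1 : d j <= `|xp j - x j|.
    apply: le_trans (lerB_dist _ _); move: hA; rewrite hd2 => hA; lra.
  have h2 : d j ^+ 2 <= (xp j - x j) ^+ 2.
    rewrite -[(xp j - x j) ^+ 2]real_normK ?num_real //.
    by rewrite ler_sqr ?nnegrE // ltW.
  have -> : a j ^- 2 * r j ^+ 2 = 4 / be ^+ 2 * (a j ^+ 2 * d j ^+ 2).
    by rewrite /ws /d; field; rewrite (gt_eqF (a0 j)) (gt_eqF be0).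
  by rewrite ler_wpM2l // ler_wpM2l ?sqr_ge0 //.
have h4 : forall j, [set: Lam] j -> (0 <= (4 / be ^+ 2)%:E * (a j ^+ 2 * (xp j - x j) ^+ 2)%:E)%E.
  by move=> j _; rewrite -EFinM lee_fin; apply: mulr_ge0 => //; apply: mulr_ge0; apply: sqr_ge0.
have h5 : forall j, [set: Lam] j -> (0 <= (if B j then ws j else 0)%:E)%E.
  by move=> j _; case: ifP => _; rewrite lee_fin // ltW // mulr_gt0 // ?invr_gt0 exprn_gt0.
rewrite esumD // -/WB WBE.
have hZ := esumZle [set: Lam] (4 / be ^+ 2) (fun j => (a j ^+ 2 * (xp j - x j) ^+ 2)%:E) c4
  (fun j => (mulr_ge0 (sqr_ge0 (a j)) (sqr_ge0 (xp j - x j)))).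
apply: le_trans (leeD (lexx _) hZ) _.
rewrite -/(Q a (fun j => (xp j - x j)%R)) Qs -EFinM -EFinD lee_fin.
have -> : (16 / L ^+ 2 + 4 * L ^+ 2) * e ^+ 2 / be ^+ 2
   = 16 * e ^+ 2 / (L ^+ 2 * be ^+ 2) + 4 / be ^+ 2 * (L * e) ^+ 2.
  by field; rewrite (gt_eqF L0) (gt_eqF be0).
by rewrite lerD // ler_wpM2l.
Qed.

End C3.


Section C2.
Context {R : realType} {Lam : countType}.

Definition CtC (t L : R) := L ^+ 2 / 2 * (powR 2 t / (1 - powR 2 t / 4)) + 2 / (1 - 2 / powR 2 t).

Lemma CtC_gt0 (t L : R) : 1 < t < 2 -> 0 < CtC t L.
Proof.
move=> ht; have /andP[r2 r4] := rho_bounds _ ht.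
rewrite /CtC; apply: ltr_wpDl.
  apply: mulr_ge0; first by apply: divr_ge0 => //; apply: sqr_ge0.
  apply: divr_ge0; first by apply: ltW; apply: lt_trans r2.
  by rewrite subr_ge0 ler_pdivrMr // mul1r ltW.
apply: divr_gt0 => //; rewrite subr_gt0 ltr_pdivrMr ?mul1r //.
Qed.

Lemma core2 (a r : Lam -> R) (Y : normedModType R) (D : set (Lam -> R))
  (F : (Lam -> R) -> Y) (L t k al : R) (xp : Lam -> R) :
  (forall j, 0 < a j /\ 0 < r j) -> 0 < L -> 1 < t < 2 ->
  (forall x1 x2, D x1 -> D x2 ->
     ((`|F x1 - F x2|)%:E <= L%:E * wnorm a 2 (fun j => (x1 j - x2 j)%R))%E) ->
  D `<=` lp a 2 -> A2 a D -> D xp -> ktnorm a r t xp = k%:E -> 0 < al ->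
  exists z, D z /\ (tikh r F xp al z <= (CtC t L * powR k t * powR al (2 - t))%:E)%E.
Proof.
move=> ar L0 ht lip Dlp A2D Dxp kE al0.
have a0 j : 0 < a j by case: (ar j).
have r0 j : 0 < r j by case: (ar j).
have a0' j : 0 <= a j by apply/ltW.
have r0' j : 0 <= r j by apply/ltW.
pose A j := a j ^- 2 * r j * al < `|xp j|.
pose z j := if A j then xp j else 0.
have zle j : `|z j| <= `|xp j| by rewrite /z; case: ifP => _ //; rewrite normr0.
have Dz : D z.
  apply: (A2D xp) => //; apply/lpQ => //; apply: le_lt_trans (Q_le a xp z zle) _.
  by apply/lpQ => //; apply: Dlp.
have QE : Q a (fun j => (xp j - z j)%R) =
    esum [set: Lam] (fun j => (if A j then 0 else a j ^+ 2 * xp j ^+ 2)%:E).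
  apply: eq_esum => j _; rewrite /z; case: ifP => _; first by rewrite subrr expr0n mulr0.
  by rewrite subr0.
have NE : N1 r z =
    esum [set: Lam] (fun j => (if A j then r j * `|xp j| else 0)%:E).
  by apply: eq_esum => j _; rewrite /z; case: ifP => _ //; rewrite normr0 mulr0.
have S1 := S1bound a r t xp k al ar ht kE al0.
have S2 := S2bound a r t xp k al ar ht kE al0.
rewrite -QE in S1; rewrite -NE in S2.
have Qf := finle _ _ (Q_ge0 _ _) S1.
have Nf := finle _ _ (N1_ge0 _ _ r0') S2.
set q := fine _ in Qf; set n := fine _ in Nf.
rewrite Qf lee_fin in S1; rewrite Nf lee_fin in S2.
have hF := lip_up _ _ _ _ _ a0' (lip xp z Dxp Dz) Qf.
exists z; split => //.
rewrite tikhE // Nf -EFinM -EFinD lee_fin.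
have q0 : 0 <= q by rewrite -lee_fin -Qf Q_ge0.
have hF2 : `|F xp - F z| ^+ 2 <= L ^+ 2 * q.
  rewrite -(sqr_sqrtr q0) -exprMn ler_sqr ?nnegrE //.
  by rewrite mulr_ge0 ?sqrtr_ge0 // ltW.
have h2 : 0 <= 2^-1 :> R by rewrite invr_ge0.
apply: le_trans (lerD (ler_wpM2l h2 (le_trans hF2 (ler_wpM2l (sqr_ge0 L) S1)))
  (ler_wpM2l (ltW al0) S2)) _.
rewrite /CtC le_eqVlt; apply/orP; left; apply/eqP; field.
have /andP[r2 r4] := rho_bounds _ ht.
rewrite (gt_eqF al0) /= gt_eqF ?subr_gt0 ?gt_eqF ?subr_gt0 ?gt_eqF //.
Qed.

End C2.


Lemma fin5 (R : realType) (w be M C3 t : R) : 0 < be -> 0 < t -> 0 <= w -> 0 <= M -> 0 < C3 ->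
  w <= M * C3 ^+ 2 / powR be t -> be * powR w t^-1 <= powR M t^-1 * powR C3 (2 / t).
Proof.
move=> be0 t0 w0 M0 C0 hw.
have Pb : 0 < powR be t by apply: powR_gt0.
have e1 : be * powR w t^-1 = powR (powR be t * w) t^-1.
  by rewrite powRM ?powR_ge0 // -powRrM mulfV ?gt_eqF // powRr1 // ltW.
have hw' : powR be t * w <= M * C3 ^+ 2.
  by rewrite mulrC -ler_pdivlMr.
rewrite e1; apply: le_trans (ge0_ler_powR _ _ _ hw') _.
- by rewrite invr_ge0 ltW.
- by rewrite nnegrE mulr_ge0 // powR_ge0.
- by rewrite nnegrE mulr_ge0 // sqr_ge0.
rewrite powRM ?sqr_ge0 // -powR_mulrn ?(ltW C0) // -powRrM.
by rewrite mulrC.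
Qed.

Lemma finlt (R : realType) (X : \bar R) : (0 <= X)%E -> (X < +oo)%E -> X = (fine X)%:E.
Proof. by case: X. Qed.

Theorem theorem5p3 (R : realType) (t L : R) (ht : 1 < t < 2) (hL : 0 < L) :
  exists Ct : R, exists c : R, 0 < Ct /\ 0 < c /\
  forall (Lam : countType) (a r : Lam -> R) (Y : completeNormedModType R)
    (D : set (Lam -> R)) (F : (Lam -> R) -> Y) (xp : Lam -> R)
    (xa : R -> (Lam -> R)),
  A1 a r D F L -> A2 a D -> D xp ->
  (forall alpha, 0 < alpha ->
     D (xa alpha) /\
     forall x, D x -> (tikh r F xp alpha (xa alpha) <= tikh r F xp alpha x)%E) ->
  let cond2 := fun C2 : R => forall alpha, 0 < alpha ->
     (tikh r F xp alpha (xa alpha) <= (C2 * powR alpha (2 - t))%:E)%E in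
  let cond3 := fun C3 : R => forall alpha, 0 < alpha ->
     `|F xp - F (xa alpha)| <= C3 * powR alpha ((2 - t) / 2) in
  [/\ (kt a r t xp <-> exists C2, 0 < C2 /\ cond2 C2),
      ((exists C2, 0 < C2 /\ cond2 C2) <-> (exists C3, 0 < C3 /\ cond3 C3)),
      (kt a r t xp -> cond2 (Ct * fine (poweR (ktnorm a r t xp) t))),
      (forall C2, 0 < C2 -> cond2 C2 -> cond3 (Num.sqrt (2 * C2))) &
      (forall C3, 0 < C3 -> cond3 C3 ->
         (ktnorm a r t xp <= (c * powR C3 (2 / t))%:E)%E)].
Proof.
have t0 : 0 < t by case/andP: ht => t1 _; lra.
set M := (16 / L ^+ 2 + 4 * L ^+ 2) * powR (L ^+ 2 / 2) (2 - t).
have M0 : 0 < M.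
  apply: mulr_gt0; last by apply: powR_gt0; apply: divr_gt0 => //; apply: exprn_gt0.
  by apply: addr_gt0; [apply: divr_gt0 => //; apply: exprn_gt0 | apply: mulr_gt0 => //; apply: exprn_gt0].
exists (CtC t L), (powR M t^-1); split; first exact: CtC_gt0.
split; first exact: powR_gt0.
move=> Lam a r Y D F xp xa hA1 hA2 Dxp hopt cond2 cond3.
case: hA1 => ar _ [Dlp _] _ [_ lip].
have a0 j : 0 < a j by case: (ar j).
have r0' j : 0 <= r j by case: (ar j) => _ /ltW.
have P3 : kt a r t xp -> cond2 (CtC t L * fine (poweR (ktnorm a r t xp) t)).
  rewrite /kt /= => hk al al0.
  have kge : (0 <= ktnorm a r t xp)%E.
    apply: le_trans (ktnorm_ge a r t xp 1 ltr01); rewrite mul1e poweR_ge0 //.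
  have kE := finlt _ _ kge hk.
  set k := fine (ktnorm a r t xp) in kE.
  have [z [Dz hz]] := core2 _ _ _ _ F _ _ _ _ _ ar hL ht (fun x1 x2 h1 h2 => (lip x1 x2 h1 h2).2) Dlp hA2 Dxp kE al0.
  apply: le_trans ((hopt al al0).2 z Dz) _.
  by rewrite kE /=.
have P4 : forall C2, 0 < C2 -> cond2 C2 -> cond3 (Num.sqrt (2 * C2)).
  move=> C2 C20 h2 al al0; have := h2 al al0; rewrite tikhE // => h.
  have hN : (0 <= al%:E * N1 r (xa al))%E.
    by apply: mule_ge0; [rewrite lee_fin ltW | apply: N1_ge0].
  have h' := le_trans (leeDl _ hN) h; rewrite lee_fin in h'.
  set e := `|F xp - F (xa al)| in h' *.
  set P := powR al (2 - t) in h'.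
  have P0 : 0 <= P by apply: powR_ge0.
  have e2 : e ^+ 2 <= 2 * C2 * P by lra.
  have -> : powR al ((2 - t) / 2) = Num.sqrt P by rewrite -powR12_sqrt // -powRrM.
  have e0 : 0 <= e by apply: normr_ge0.
  have C20' : 0 <= 2 * C2 by rewrite mulr_ge0 // ltW.
  have hs : Num.sqrt (2 * C2) * Num.sqrt P = Num.sqrt (2 * C2 * P) by rewrite [RHS]sqrtrM.
  rewrite hs -(ger0_norm e0) -sqrtr_sqr ler_sqrt //.
  by rewrite mulr_ge0.
have P5 : forall C3, 0 < C3 -> cond3 C3 ->
    (ktnorm a r t xp <= (powR M t^-1 * powR C3 (2 / t))%:E)%E.
  move=> C3 C30 h3; apply: ge_ereal_sup => _ [be be0 <-].
  move: be0; rewrite /= => be0.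
  set al := L ^+ 2 * be / 2.
  have al0 : 0 < al by apply: divr_gt0 => //; apply: mulr_gt0 => //; apply: exprn_gt0.
  have [Dx optx] := hopt al al0.
  have hW := core3 _ _ _ _ _ _ _ _ _ ar hL be0 lip Dlp hA2 Dxp Dx optx.
  change (be%:E * poweR (Wf a r xp be) t^-1 <= (powR M t^-1 * powR C3 (2 / t))%:E)%E.
  set e := `|F xp - F (xa al)| in hW.
  have e0 : 0 <= e by apply: normr_ge0.
  have he : e <= C3 * powR al ((2 - t) / 2) by apply: h3.
  have e2 : e ^+ 2 <= C3 ^+ 2 * powR al (2 - t).
    have -> : powR al (2 - t) = (powR al ((2 - t) / 2)) ^+ 2.
      by rewrite -powR_mulrn ?powR_ge0 // -powRrM divfK // pnatr_eq0.
    rewrite -exprMn ler_sqr ?nnegrE //.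
    by rewrite mulr_ge0 ?powR_ge0 // ltW.
  have alE : powR al (2 - t) = powR (L ^+ 2 / 2) (2 - t) * powR be (2 - t).
    rewrite -powRM; last by apply: ltW.
      by congr powR; rewrite /al; field.
    by apply: divr_ge0 => //; apply: sqr_ge0.
  have beE : powR be (2 - t) = be ^+ 2 / powR be t.
    rewrite powRB ?gt_eqF ?implybT //; last by case/andP: ht.
    by apply: (congr1 (fun y => y / powR be t)); apply: powR_mulrn; apply: ltW.
  have coef0 : 0 <= 16 / L ^+ 2 + 4 * L ^+ 2.
    by apply: addr_ge0; [apply: divr_ge0 => //; apply: sqr_ge0 | apply: mulr_ge0 => //; apply: sqr_ge0].
  have hW2 : (Wf a r xp be <= (M * C3 ^+ 2 / powR be t)%:E)%E.
    apply: le_trans hW _; rewrite lee_fin.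
    have ib : 0 <= (be ^+ 2)^-1 by rewrite invr_ge0 sqr_ge0.
    apply: le_trans (ler_wpM2r ib (ler_wpM2l coef0 e2)) _.
    rewrite alE beE /M le_eqVlt; apply/orP; left; apply/eqP; field.
    by rewrite !gt_eqF // powR_gt0.
  have WE := finle _ _ (Wf_ge0 a r xp be ar) hW2.
  rewrite WE poweR_EFin -EFinM lee_fin.
  rewrite WE lee_fin in hW2.
  apply: fin5 => //; last by apply: ltW.
  by rewrite -lee_fin -WE; apply: Wf_ge0.
have Pi_ii : kt a r t xp -> exists C2, 0 < C2 /\ cond2 C2.
  move=> hk; have h := P3 hk.
  set K := fine (poweR (ktnorm a r t xp) t) in h.
  have K0 : 0 <= K by apply: fine_ge0; apply: poweR_ge0.
  have Ct0 := CtC_gt0 t L ht.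
  exists (CtC t L * K + 1); split.
    by apply: ltr_wpDl; [apply: mulr_ge0 => //; apply: ltW | apply: ltr01].
  move=> al al0; apply: le_trans (h al al0) _; rewrite lee_fin.
  by rewrite ler_wpM2r ?powR_ge0 // lerDl.
have Piii_i : (exists C3, 0 < C3 /\ cond3 C3) -> kt a r t xp.
  move=> [C3 [C30 h]]; rewrite /kt /=.
  by apply: le_lt_trans (P5 C3 C30 h) _; apply: ltry.
have Pii_iii : (exists C2, 0 < C2 /\ cond2 C2) -> (exists C3, 0 < C3 /\ cond3 C3).
  move=> [C2 [C20 h]]; exists (Num.sqrt (2 * C2)); split; last exact: P4.
  by rewrite sqrtr_gt0 mulr_gt0.
split => //.
- by split => // h; apply: Piii_i; apply: Pii_iii.
- by split => // h; apply: Pi_ii; apply: Piii_i.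
Qed.
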